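(* Let $M$ be a deterministic classical Turing machine operating in time $f(n)$, where $n$ is the input size. Then there exists a measurement-based quantum Turing machine $M'$ operating in expected time $O(f(n))$ such that for every input $x$, $M(x)=M'(\ket x)$.
   Context: A deterministic Turing machine (TM) is a triple $M=(K,\Sigma,\delta)$: $K$ finite set of states with initial state $s$, $\Sigma$ finite alphabet containing a blank $\#$, $\delta:K\times\Sigma\to(K\cup\{\text{yes},\text{no},h\})\times\Sigma\times\{\leftarrow,\rightarrow,-\}$; its output is yes/no if that state is reached, and the final tape contents if $h$ is reached (for a quantum machine ending in $h$, equality of outputs means the final quantum tape is the basis state encoding the classical tape contents). A (one-tape) classically-controlled quantum Turing machine (CQTM) is a quintuple $M=(K,\Sigma_C,\Sigma_Q,\mathcal A,\delta)$: $K$ finite set of classical states with initial state $s$; $\Sigma_Q$ finite alphabet containing blank $\#$, labelling an orthonormal basis of each quantum cell of an infinite tape; $\Sigma_C$ finite alphabet of classical outcomes containing $\#,\overline\#$; $\mathcal A$ finite set of one-cell admissible transformations (families $\{M_c\}_c$ of operators with $\sum_c M_c^\dagger M_c=\mathrm{Id}$, outcomes in $\Sigma_C$) containing the blank test $\{\ket\#\bra\#,I-\ket\#\bra\#\}$; $\delta:K\times\Sigma_C\to(K\cup\{\text{yes},\text{no},h\})\times\{\leftarrow,\rightarrow,-\}\times\mathcal A$ total. At each step (one time unit), in state $q$ with last outcome $\tau$ and $\delta(q,\tau)=(p,D,A)$, the head moves by $D$, then $A=\{M_c\}$ is applied to the pointed cell, yielding outcome $c$ with probability $\bra\psi M_c^\dagger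 M_c\ket\psi$ and new tape state $M_c\ket\psi$ normalized; the new state is $p$, last outcome $c$. The input is placed on adjacent cells (others $\ket\#$), the head starts on the blank cell just left of the input, initial state $s$, initial last outcome $\#$. Halting on yes/no gives that output; halting on $h$ gives the state of the tape from its leftmost to rightmost non-$\ket\#$ cell. A measurement-based quantum Turing machine (MQTM) is a CQTM all of whose admissible transformations in $\mathcal A$ are projective measurements, i.e. families $\{P_k\}$ of orthogonal projectors with $P_kP_l=\delta_{kl}P_k$ and $\sum_k P_k=\mathrm{Id}$. Its running time is a random variable; ''expected time'' refers to its expectation. *)

(* Defs.v *)
From HB Require Import structures.
From mathcomp Require Import all_boot all_order all_algebra.
From mathcomp Require Import all_classical all_reals all_analysis.
From mathcomp Require Import complex.
Set Implicit Arguments.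
Unset Strict Implicit.
Unset Printing Implicit Defensive.
Import Order.TTheory GRing.Theory Num.Theory.
Local Open Scope ring_scope.

Inductive dir := DLeft | DRight | DStay.

Definition move (h : int) (D : dir) : int :=
  match D with DLeft => h - 1 | DRight => h + 1 | DStay => h end.

Inductive hstate := HYes | HNo | HHalt.

Definition halted {K : Type} (q : K + hstate) : bool :=
  if q is inr _ then true else false.

Definition upd {T : Type} (t : int -> T) (i : int) (a : T) : int -> T :=
  fun j => if j == i then a else t j.

(* input x written on cells 1..|x|, all other cells blank; the head
   starts on cell 0, the blank cell just left of the input *)
Definition input_tape {T : Type} (b : T) (x : seq T) : int -> T :=
  fun i => match i with Posz k.+1 => nth b x k | _ => b end.

(* [tape_contents b t s]: s is the contents of tape t from its leftmost
   to its rightmost non-blank cell (s = [::] iff t is all blank). *)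
Definition tape_contents {T : eqType} (b : T) (t : int -> T) (s : seq T) : Prop :=
  (s = [::] /\ forall i, t i = b) \/
  (exists l : int,
     [/\ head b s != b, last b s != b,
         forall k : nat, (k < size s)%N -> t (l + k%:Z) = nth b s k
       & forall i : int, (i < l \/ l + (size s)%:Z <= i) -> t i = b]).

Inductive tm_out (T : Type) := OYes | ONo | OTape of seq T.
Arguments OYes {T}. Arguments ONo {T}.

Section DTM.
Variables (K Sig : finType) (s : K) (blank : Sig)
          (delta : K -> Sig -> (K + hstate) * Sig * dir).

Definition dconfig := ((K + hstate) * (int -> Sig) * int)%type.

Definition dstep (c : dconfig) : dconfig :=
  let: (q, t, h) := c in
  match q with
  | inl q0 => let: (p, a, D) := delta q0 (t h) in (p, upd t h a, move h D)
  | inr _ => c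
  end.

Definition drun (x : seq Sig) (k : nat) : dconfig :=
  iter k dstep (inl s, input_tape blank x, 0%:Z).

Definition valid_input (x : seq Sig) : bool := blank \notin x.

Definition dtm_time (f : nat -> nat) : Prop :=
  forall x, valid_input x -> halted (drun x (f (size x))).1.1.

Definition dtm_output (x : seq Sig) (o : tm_out Sig) : Prop :=
  exists k, match (drun x k) with
            | (inr HYes, _, _) => o = OYes
            | (inr HNo, _, _) => o = ONo
            | (inr HHalt, t, _) => exists w, o = OTape w /\ tape_contents blank t w
            | (inl _, _, _) => False
            end.
End DTM.

(* A one-cell operator is given by its matrix: op u v = <u| O |v>.
   An admissible transformation is a family {M_c}_{c in SigC}
   (M_c = 0 for unused outcomes) with sum_c M_c^dagger M_c = Id. *)
Definition admissible (R : realType) (SC SQ : finType)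
    (M : SC -> SQ -> SQ -> R[i]) : Prop :=
  forall u v : SQ,
    \sum_(c : SC) \sum_(w : SQ) conjc (M c w u) * M c w v = (u == v)%:R.

Definition projective (R : realType) (SC SQ : finType)
    (M : SC -> SQ -> SQ -> R[i]) : Prop :=
  [/\ forall c u v, M c u v = conjc (M c v u),
      forall c d u v, \sum_(w : SQ) M c u w * M d w v = if c == d then M c u v else 0
    & forall u v, \sum_(c : SC) M c u v = (u == v)%:R].

Definition blank_test (R : realType) (SC SQ : finType) (cb cbbar : SC) (qb : SQ)
    (M : SC -> SQ -> SQ -> R[i]) : Prop :=
  forall c u v, M c u v =
    if c == cb then ((u == qb) && (v == qb))%:R
    else if c == cbbar then ((u == v) && (u != qb))%:R
    else 0.

Record CQTM (R : realType) := MkCQTM {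
  qK : finType;
  qSC : finType;
  qSQ : finType;
  qA : finType;
  qs : qK;
  qblank : qSQ;
  qcb : qSC;
  qcbbar : qSC;
  qop : qA -> qSC -> qSQ -> qSQ -> R[i];
  qdelta : qK -> qSC -> (qK + hstate) * dir * qA;
  qcb_neq : qcb != qcbbar;
  qop_adm : forall a, admissible (qop a);
  qop_blank : exists a, blank_test qcb qcbbar qblank (qop a)
}.
Arguments qop {R} c _ _ _ _ : rename.
Arguments qdelta {R} c _ _ : rename.

Definition is_MQTM (R : realType) (M : CQTM R) : Prop :=
  forall a, projective (qop M a).

Section CQTM_semantics.
Variables (R : realType) (M : CQTM R).

Definition qtape := int -> qSQ M.
(* (unnormalized) state of the quantum tape: amplitude of each basis tape *)
Definition qstate := qtape -> R[i].

Definition sqmod (z : R[i]) : R := complex.Re z ^+ 2 + complex.Im z ^+ 2.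

Definition sqnorm (psi : qstate) : \bar R :=
  \esum_(t in [set: qtape]) (sqmod (psi t))%:E.

Definition apply1 (O : qSQ M -> qSQ M -> R[i]) (i : int) (psi : qstate) : qstate :=
  fun t => \sum_(a : qSQ M) O (t i) a * psi (upd t i a).

(* configuration: state, last outcome, head position, unnormalized tape
   state (M_{c_k} ... M_{c_1} |x>, so that the probability of the outcome
   history c_1..c_k is its squared norm) *)
Definition qconfig := ((qK M + hstate) * qSC M * int * qstate)%type.

Definition qstep (cf : qconfig) (c : qSC M) : qconfig :=
  let: (q, tau, h, psi) := cf in
  match q with
  | inl q0 => let: (p, D, a) := qdelta M q0 tau in
              let h' := move h D in (p, c, h', apply1 (qop M a c) h' psi)
  | inr _ => cf
  end.

Definition ket_input (x : seq (qSQ M)) : qstate :=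
  fun t => if t == input_tape (qblank M) x then 1 else 0.

Definition qinit (x : seq (qSQ M)) : qconfig := (inl (qs M), qcb M, 0%:Z, ket_input x).

Definition qrun (x : seq (qSQ M)) (hs : seq (qSC M)) : qconfig :=
  foldl qstep (qinit x) hs.

Definition halts_exactly (x : seq (qSQ M)) (hs : seq (qSC M)) : bool :=
  halted (qrun x hs).1.1.1 && ~~ halted (qrun x (take (size hs).-1 hs)).1.1.1.

Definition prob_time (x : seq (qSQ M)) (k : nat) : \bar R :=
  (\sum_(hs : k.-tuple (qSC M) | halts_exactly x hs) sqnorm (qrun x hs).2)%E.

Definition halts_as (x : seq (qSQ M)) : Prop :=
  (\sum_(k <oo) prob_time x k)%E = 1%E.

Definition expected_time (x : seq (qSQ M)) : \bar R :=
  (\sum_(k <oo) ((k%:R)%:E * prob_time x k))%E.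

(* the output on a halting branch (state hs, tape state psi) is o: for h,
   the final quantum tape is (up to a nonzero scalar, i.e. after
   normalization up to a global phase) a basis state |t>, with t having
   contents w *)
Definition qout_is (q : qK M + hstate) (psi : qstate) (o : tm_out (qSQ M)) : Prop :=
  match q with
  | inr HYes => o = OYes
  | inr HNo => o = ONo
  | inr HHalt => exists w, o = OTape w /\
       exists (t : qtape) (lam : R[i]), [/\ lam != 0, psi t = lam,
          forall t', t' != t -> psi t' = 0 & tape_contents (qblank M) t w]
  | inl _ => False
  end.

Definition cqtm_output (x : seq (qSQ M)) (o : tm_out (qSQ M)) : Prop :=
  halts_as x /\
  forall hs : seq (qSC M), halts_exactly x hs -> (0 < sqnorm (qrun x hs).2)%E ->
    qout_is (qrun x hs).1.1.1 (qrun x hs).2 o.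

End CQTM_semantics.
Arguments sqnorm {R} M psi.
Arguments apply1 {R} M O i psi _.
Arguments qstep {R} M cf c.
Arguments ket_input {R} M x _.
Arguments qinit {R} M x.
Arguments qrun {R} M x hs.
Arguments halts_exactly {R} M x hs.
Arguments prob_time {R} M x k.
Arguments halts_as {R} M x.
Arguments expected_time {R} M x.
Arguments qout_is {R} M q psi o.
Arguments cqtm_output {R} M x o.

Definition map_out {A B : Type} (g : A -> B) (o : tm_out A) : tm_out B :=
  match o with OYes => OYes | ONo => ONo | OTape w => OTape (map g w) end.

(* Main.v *)
Require Import Defs.
From HB Require Import structures.
From mathcomp Require Import all_boot all_order all_algebra.
From mathcomp Require Import all_classical all_reals all_analysis.
From mathcomp Require Import complex.
From mathcomp Require Import ring lra.
Import Order.TTheory GRing.Theory Num.Theory.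
Local Open Scope ring_scope.
Set Implicit Arguments.
Unset Strict Implicit.
Unset Printing Implicit Defensive.

Lemma sum_delta (R : ringType) (T : finType) (u : T) (g : T -> R) :
  \sum_(x : T) (u == x)%:R * g x = g u.
Proof.
rewrite (bigD1 u) //= eqxx mul1r big1 ?addr0 // => x /negbTE.
by rewrite eq_sym => ->; rewrite mul0r.
Qed.

Lemma sum_delta_r (R : ringType) (T : finType) (u : T) (g : T -> R) :
  \sum_(x : T) g x * (x == u)%:R = g u.
Proof.
rewrite (bigD1 u) //= eqxx mulr1 big1 ?addr0 // => x /negbTE ->.
by rewrite mulr0.
Qed.

Section Ops.
Variables (R : realType) (Sig : finType) (blank : Sig).

Definition SC := (Sig + bool)%type.
Definition nS : nat := #|Sig|.
Definition ninv : R := (nS%:R)^-1.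

Lemma nS_gt0 : (0 < nS)%N.
Proof. by apply/card_gt0P; exists blank. Qed.

Lemma nS_neq0 : (nS%:R : R) != 0.
Proof. by rewrite pnatr_eq0 -lt0n nS_gt0. Qed.

Definition frop (A : option bool) (c : SC) (u v : Sig) : R :=
  match A with
  | None => if c == inr true then ((u == blank) && (v == blank))%:R
            else if c == inr false then ((u == v) && (u != blank))%:R else 0
  | Some true => match c with inl w => ((u == w) && (v == w))%:R | inr _ => 0 end
  | Some false => match c with inl _ => 0 | inr true => ninv
                                | inr false => (u == v)%:R - ninv end
  end.

Definition rprojective (F : SC -> Sig -> Sig -> R) : Prop :=
  [/\ forall c u v, F c u v = F c v u,
      forall c d u v, \sum_(w : Sig) F c u w * F d w v = if c == d then F c u v else 0
    & forall u v, \sum_(c : SC) F c u v = (u == v)%:R].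

Lemma sumSC (g : SC -> R) : \sum_(c : SC) g c = \sum_(w : Sig) g (inl w) + (g (inr true) + g (inr false)).
Proof. by rewrite big_sumType /= big_bool. Qed.

Lemma sum_const_Sig (k : R) : \sum_(w : Sig) k = k * nS%:R.
Proof. by rewrite sumr_const [RHS]mulr_natr. Qed.

Lemma ninv_sq : \sum_(w : Sig) ninv * ninv = ninv.
Proof. by rewrite sum_const_Sig /ninv -mulrA mulVf ?mulr1 // nS_neq0. Qed.

Lemma frop_proj A : rprojective (frop A).
Proof.
case: A => [[]|]; split.
- by case=> [w|[]] u v //=; rewrite andbC.
- case=> [w|b] [w'|b'] u v /=; rewrite ?if_same; try by rewrite big1 // => x _; rewrite ?mul0r ?mulr0.
  rewrite (bigD1 w) //= big1; last by move=> x /negbTE ->; rewrite andbF mul0r.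
  rewrite addr0 eqxx ?andbT; case: (w =P w') => [<-|/eqP ne].
    by rewrite eqxx /= -natrM mulnb.
  have -> : (inl w == inl w' :> SC) = false by apply/negbTE.
  by rewrite /= mulr0.
- move=> u v; rewrite sumSC /= !addr0.
  rewrite (bigD1 u) //= eqxx /= big1 ?addr0; last by move=> x /negbTE; rewrite eq_sym => ->.
  by rewrite eq_sym.
- by case=> [w|[]] u v //=; rewrite eq_sym.
- have h1 : forall v, \sum_(x : Sig) ninv * ((x == v)%:R - ninv) = 0.
    move=> v; under eq_bigr do rewrite mulrBr.
    by rewrite sumrB ninv_sq sum_delta_r subrr.
  case=> [w|b] [w'|b'] u v /=; rewrite ?if_same; try by rewrite big1 // => x _; rewrite ?mul0r ?mulr0.
  case: b; case: b' => /=.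
  + exact: ninv_sq.
  + exact: h1.
  + under eq_bigr do rewrite mulrC eq_sym.
    exact: h1.
  + under eq_bigr do rewrite mulrBl.
    by rewrite sumrB sum_delta h1 subr0.
- by move=> u v; rewrite sumSC /= big1 // add0r addrC subrK.
- case=> [w|[]] u v //=; first by rewrite andbC.
  case: (u =P v) => [->|/eqP ne]; first by rewrite eqxx.
  by rewrite [v == u]eq_sym (negbTE ne).
- case=> [w|b] [w'|b'] u v /=; rewrite ?if_same; try by rewrite big1 // => x _; rewrite ?mul0r ?mulr0.
  case: b; case: b' => /=.
  + rewrite (bigD1 blank) //= big1; last by move=> x /negbTE ->; rewrite andbF mul0r.
    by rewrite eqxx addr0 ?andbT -natrM mulnb.
  + by rewrite big1 // => x _; case: (x =P blank) => [->|_]; rewrite ?eqxx ?andbN ?andbF /= ?mulr0 ?mul0r.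
  + by rewrite big1 // => x _; case: (x =P blank) => [->|_]; rewrite ?eqxx ?andbN ?andbF /= ?mulr0 ?mul0r.
  + rewrite (bigD1 u) //= big1; last by move=> x /negbTE; rewrite eq_sym => ->; rewrite mul0r.
    by rewrite eqxx addr0 -natrM mulnb; case: (u =P v) => [->|]; rewrite ?andbb ?andbF.
- move=> u v; rewrite sumSC /= big1 // add0r.
  case: (u =P blank) => [->|/eqP/negbTE ub]; rewrite ?eqxx ?ub /=.
    by rewrite andbF addr0 eq_sym.
  by rewrite add0r andbT.
Qed.
End Ops.

Section Machine.
Variables (R : realType) (K Sig : finType) (s : K) (blank : Sig)
          (delta : K -> Sig -> (K + hstate) * Sig * dir).

Definition QK := option (K + (K * Sig * bool)).
Definition QA := option bool.

Definition qopC (a : QA) (c : SC Sig) (u v : Sig) : R[i] := ((@frop R Sig blank a c u v)%:C)%C.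

Lemma qopC_proj a : projective (qopC a).
Proof.
have [h1 h2 h3] := frop_proj R blank a.
split.
- by move=> c u v; rewrite /qopC conjc_real h1.
- move=> c d u v; rewrite /qopC.
  under eq_bigr do rewrite -rmorphM.
  by rewrite -rmorph_sum h2; case: ifP => _ //; rewrite rmorph0.
- by move=> u v; rewrite /qopC -rmorph_sum h3 rmorph_nat.
Qed.

Lemma proj_adm (SC' SQ : finType) (M : SC' -> SQ -> SQ -> R[i]) : projective M -> admissible M.
Proof.
case=> h1 h2 h3 u v.
under eq_bigr => c _ do under eq_bigr => w _ do rewrite -h1.
under eq_bigr => c _ do rewrite h2 eqxx.
exact: h3.
Qed.

Lemma qopC_adm a : admissible (qopC a).
Proof. exact/proj_adm/qopC_proj. Qed.

Lemma qopC_blank : exists a, blank_test (inr true : SC Sig) (inr false) blank (qopC a).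
Proof.
exists None => c u v; rewrite /qopC /frop.
case: ifP => _; first exact: rmorph_nat.
by case: ifP => _; [exact: rmorph_nat | exact: rmorph0].
Qed.

Definition cont (p : K + hstate) : QK + hstate :=
  match p with inl p0 => inl (Some (inl p0)) | inr h => inr h end.

Definition qd (q : QK) (tau : SC Sig) : (QK + hstate) * dir * QA :=
  match q with
  | None => (inl (Some (inl s)), DStay, Some true)
  | Some (inl q0) =>
      match tau with
      | inl a => let: (p, b, D) := delta q0 a in
                 if a == b then (cont p, D, Some true)
                 else (inl (Some (inr (q0, a, true))), DStay, Some false)
      | inr _ => (inl None, DStay, Some true)
      end
  | Some (inr (q0, a, true)) => (inl (Some (inr (q0, a, false))), DStay, Some true)
  | Some (inr (q0, a, false)) =>
      match tau with
      | inl w => let: (p, b, D) := delta q0 a in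
                 if w == b then (cont p, D, Some true)
                 else (inl (Some (inr (q0, a, true))), DStay, Some false)
      | inr _ => (inl None, DStay, Some true)
      end
  end.

Lemma cb_neq : (inr true : SC Sig) != inr false. Proof. by []. Qed.

Definition Mq : CQTM R :=
  {| qK := QK; qSC := SC Sig; qSQ := Sig; qA := QA; qs := None; qblank := blank;
     qcb := inr true; qcbbar := inr false; qop := qopC; qdelta := qd;
     qcb_neq := cb_neq; qop_adm := qopC_adm; qop_blank := qopC_blank |}.

Lemma Mq_MQTM : is_MQTM Mq.
Proof. exact: qopC_proj. Qed.

End Machine.

Section Tape.
Variable (Sig : finType).
Implicit Types (t T : int -> Sig) (i : int) (a b w : Sig).

Lemma upd_at t i a : upd t i a i = a.
Proof. by rewrite /upd eqxx. Qed.

Lemma upd_upd t i a b : upd (upd t i a) i b = upd t i b.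
Proof. by apply/funext => j; rewrite /upd; case: eqP. Qed.

Lemma upd_eqP t T i : upd t i (T i) = T <-> forall j, j != i -> t j = T j.
Proof.
split.
- by move=> <- j /negbTE ji; rewrite /upd ji.
- move=> h; apply/funext => j; rewrite /upd; case: eqP => [->//|/eqP]; exact: h.
Qed.

Lemma tape_eqE t T i : (t == T) = (t i == T i) && (upd t i (T i) == T).
Proof.
apply/idP/idP.
- by move/eqP=> ->; rewrite eqxx /=; apply/eqP/upd_eqP.
- case/andP=> /eqP ti /eqP/upd_eqP h; apply/eqP/funext => j.
  by case: (j =P i) => [->//|/eqP]; exact: h.
Qed.

Lemma upd_eqE t T i b : (upd t i b == T) = (b == T i) && (upd t i (T i) == T).
Proof.
rewrite (tape_eqE _ _ i) upd_at upd_upd; congr (_ && _).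
Qed.

Lemma tape_upd_eqE t T i w : (t == upd T i w) = (t i == w) && (upd t i (T i) == T).
Proof.
rewrite (tape_eqE _ _ i) [upd T i w i]upd_at; congr (_ && _).
apply/idP/idP => /eqP h; apply/eqP/funext => j; have := congr1 (fun f => f j) h;
  by rewrite /upd; case: eqP => [->|].
Qed.
End Tape.

Section Sim.
Variables (R : realType) (K Sig : finType) (s : K) (blank : Sig)
          (delta : K -> Sig -> (K + hstate) * Sig * dir).

Local Notation M := (Mq R s blank delta).
Local Notation SCt := (SC Sig).
Local Notation fr := (@frop R Sig blank).

Definition simcfg := ((QK K Sig + hstate) * SCt * int * (int -> Sig) * R * nat)%type.

Definition midq (q : QK K Sig + hstate) : bool :=
  if q is inl (Some (inr (_, _, true))) then true else false.

Definition donestep (q0 : QK K Sig) (tau : SCt) : bool :=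
  match q0, tau with
  | Some (inl q1), inl a => a == (delta q1 a).1.2
  | Some (inr (q1, a, false)), inl w => w == (delta q1 a).1.2
  | _, _ => false
  end.

Definition simstep (sg : simcfg) (c : SCt) : simcfg :=
  let: (q, tau, h, T, lam, j) := sg in
  match q with
  | inr _ => sg
  | inl q0 =>
    let: (p, D, A) := qd s delta q0 tau in
    let h' := move h D in
    let j' := (j + donestep q0 tau)%N in
    if A == Some false then (p, c, h', T, lam, j')
    else if midq (inl q0) then
      match c with
      | inl w => (p, c, h', upd T h' w, lam * fr (Some false) tau w (T h'), j')
      | inr _ => (p, c, h', T, 0, j')
      end
    else (p, c, h', T, lam * (c == inl (T h'))%:R, j')
  end.

Definition sinit (x : seq Sig) : simcfg :=
  (inl None, inr true, 0%:Z, input_tape blank x, 1, 0%N).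

Definition sim (x : seq Sig) (hs : seq SCt) : simcfg := foldl simstep (sinit x) hs.

Definition repr (sg : simcfg) : (int -> Sig) -> R :=
  let: (q, tau, h, T, lam, j) := sg in
  fun t => lam * (if midq q then fr (Some false) tau (t h) (T h) * (upd t h (T h) == T)%:R
                  else (t == T)%:R).

Definition rep (sg : simcfg) : qstate M := fun t => ((repr sg t)%:C)%C.

Lemma apply1R (a : QA) (c : SCt) (i : int) (phi : (int -> Sig) -> R) :
  apply1 M (qop M a c) i (fun t => ((phi t)%:C)%C) =
  fun t => ((\sum_(b : Sig) fr a c (t i) b * phi (upd t i b))%:C)%C.
Proof.
apply/funext => t; rewrite /apply1 rmorph_sum; apply: eq_bigr => b _.
by rewrite rmorphM.
Qed.

Lemma qd_facts q0 tau :
  let: (p, D, A) := qd s delta q0 tau in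
  [/\ A != None,
      A = Some false -> [/\ D = DStay, ~~ midq (inl q0) & midq p]
    & A = Some true -> ~~ midq p /\ (midq (inl q0) -> D = DStay)].
Proof.
case: q0 => [[q1|[[q1 a] []]]|] /=; try by split.
- case: tau => [a|b] //=; case: (delta q1 a) => [[p b] D]; case: ifP => _ //.
  by split => //; case: p.
- case: tau => [w|b] //=; case: (delta q1 a) => [[p b] D]; case: ifP => _ //.
  by split => //; case: p.
Qed.

Lemma L1 (c : SCt) (i : int) (T t : int -> Sig) (lam : R) :
  \sum_(b : Sig) fr (Some true) c (t i) b * (lam * (upd t i b == T)%:R) =
  lam * (c == inl (T i))%:R * (t == T)%:R.
Proof.
case: c => [w|b] /=; last by rewrite big1 ?mulr0 ?mul0r // => b' _; rewrite mul0r.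
rewrite (bigD1 w) //= big1 ?addr0; last by move=> b /negbTE ->; rewrite andbF mul0r.
rewrite eqxx andbT upd_eqE (tape_eqE t T i).
have -> : (inl w == inl (T i) :> SCt) = (w == T i) by [].
case: (t i =P w) => [->|ne] /=; last first.
  case: (w =P T i) => [e|_]; last by rewrite !(mulr0, mul0r).
  by rewrite -e (introF eqP ne) /= !(mulr0, mul0r).
by case: (w =P T i) => _ /=; rewrite ?mulr0 ?mul0r ?mulr1 ?mul1r.
Qed.

Lemma L2 (c : SCt) (i : int) (T t : int -> Sig) (lam : R) :
  \sum_(b : Sig) fr (Some false) c (t i) b * (lam * (upd t i b == T)%:R) =
  lam * (fr (Some false) c (t i) (T i) * (upd t i (T i) == T)%:R).
Proof.
rewrite (bigD1 (T i)) //= big1 ?addr0; last first.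
  by move=> b /negbTE nb; rewrite upd_eqE nb /= !mulr0.
by rewrite upd_eqE eqxx /= mulrCA.
Qed.

Lemma L3 (w : Sig) (tau : SCt) (i : int) (T t : int -> Sig) (lam : R) :
  \sum_(b : Sig) fr (Some true) (inl w) (t i) b *
     (lam * (fr (Some false) tau (upd t i b i) (T i) * (upd (upd t i b) i (T i) == T)%:R)) =
  lam * fr (Some false) tau w (T i) * (t == upd T i w)%:R.
Proof.
rewrite (bigD1 w) //= big1 ?addr0; last by move=> b /negbTE ->; rewrite andbF mul0r.
rewrite eqxx andbT upd_at upd_upd tape_upd_eqE.
by case: (t i == w); rewrite /= ?mul1r ?mul0r ?mulr0 ?mulrA.
Qed.

Lemma L3' (b0 : bool) (tau : SCt) (i : int) (T t : int -> Sig) (phi : (int -> Sig) -> R) :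
  \sum_(b : Sig) fr (Some true) (inr b0) (t i) b * phi (upd t i b) = 0.
Proof. by rewrite big1 // => b _; rewrite mul0r. Qed.

End Sim.

Section Corr.
Variables (R : realType) (K Sig : finType) (s : K) (blank : Sig)
          (delta : K -> Sig -> (K + hstate) * Sig * dir).

Local Notation M := (Mq R s blank delta).
Local Notation SCt := (SC Sig).
Local Notation fr := (@frop R Sig blank).
Local Notation simstep := (simstep s blank delta).
Local Notation rep := (@rep R K Sig s blank delta).

Definition qc (sg : simcfg R K Sig) : qconfig M :=
  let: (q, tau, h, T, lam, j) := sg in (q, tau, h, rep sg).

Lemma repE q tau h T lam j : rep (q, tau, h, T, lam, j) =
  fun t => ((lam * (if midq q then fr (Some false) tau (t h) (T h) * (upd t h (T h) == T)%:R
                   else (t == T)%:R))%:C)%C.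
Proof. by []. Qed.

Lemma step_corr sg c : qstep M (qc sg) c = qc (simstep sg c).
Proof.
case: sg => [[[[[q tau] h] T] lam] j].
case: q => [q0|hh] //.
rewrite /qstep /simstep /qc.
cbn -[midq frop upd rep apply1 qd eq_op].
have := qd_facts s delta q0 tau.
case: (qd s delta q0 tau) => [[p D] A] [hA hF hT].
case: A hA hF hT => [[]|] // _ hF hT.
- rewrite (_ : (Some true == Some false :> QA) = false) //.
  have [np hD] := hT erefl.
  cbn -[midq frop upd rep apply1 qd eq_op].
  case M0: (midq (inl q0)).
  + rewrite hD //=.
    case: c => [w|b0].
    * rewrite !repE M0 (negbTE np) apply1R; congr (_, _); apply/funext => t.
      by rewrite L3.
    * rewrite !repE M0 (negbTE np) apply1R; congr (_, _); apply/funext => t.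
      by rewrite big1 ?mul0r // => b _; rewrite mul0r.
  + rewrite !repE M0 (negbTE np) apply1R; congr (_, _); apply/funext => t.
    by rewrite L1.
- have [-> nm mp] := hF erefl.
  rewrite eqxx.
  cbn -[midq frop upd rep apply1 qd eq_op].
  rewrite !repE (negbTE nm) mp apply1R; congr (_, _); apply/funext => t.
  by rewrite L2.
Qed.
End Corr.

Section TupleSum.
Variables (R : realType) (C : finType).

Lemma sum_tuple_cons k (F : seq C -> R) :
  \sum_(t : k.+1.-tuple C) F t = \sum_(c : C) \sum_(t : k.-tuple C) F (c :: t).
Proof.
rewrite pair_bigA /=.
rewrite (reindex (fun p : C * k.-tuple C => cons_tuple p.1 p.2)) //=.
exists (fun t : k.+1.-tuple C => (thead t, behead_tuple t)).
- by case=> c t _ /=; rewrite theadE; congr pair; apply: val_inj.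
- move=> t _; apply: val_inj => /=.
  by case: t => [[|a l] //=].
Qed.

Lemma sum_tuple0 (F : 0.-tuple C -> R) : \sum_(t : 0.-tuple C) F t = F [tuple].
Proof.
rewrite (bigD1 [tuple]) //= big1 ?addr0 // => t; by rewrite (tuple0 t) => /negP.
Qed.

Lemma sum_tuple_rcons k (F : seq C -> R) :
  \sum_(t : k.+1.-tuple C) F t = \sum_(t : k.-tuple C) \sum_(c : C) F (rcons t c).
Proof.
elim: k F => [|k IH] F.
  rewrite sum_tuple_cons sum_tuple0; apply: eq_bigr => c _.
  by rewrite sum_tuple0.
rewrite sum_tuple_cons (sum_tuple_cons k (fun t => \sum_c F (rcons t c))).
by apply: eq_bigr => c0 _; rewrite (IH (fun t => F (c0 :: t))).
Qed.
End TupleSum.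

Section Frame.
Variables (R : realType) (C : finType) (W Phi : seq C -> R) (H : seq C -> bool).
Hypotheses (W0 : W [::] = 1) (H0 : H [::] = false)
  (Wge0 : forall hs, 0 <= W hs) (Phige0 : forall hs, 0 <= Phi hs)
  (Hfrozen : forall hs c, H hs -> H (rcons hs c))
  (mass : forall hs, ~~ H hs -> \sum_(c : C) W (rcons hs c) = W hs)
  (drift : forall hs, ~~ H hs ->
     \sum_(c : C) W (rcons hs c) * (if H (rcons hs c) then 0 else Phi (rcons hs c))
       <= W hs * (Phi hs - 1)).

Definition pF k : R := \sum_(t : k.-tuple C) (if H t && ~~ H (take k.-1 t) then W t else 0).
Definition SF k : R := \sum_(t : k.-tuple C) (if ~~ H t then W t else 0).
Definition VF k : R := \sum_(t : k.-tuple C) (if ~~ H t then W t * Phi t else 0).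

Lemma take_rcons_tuple k (t : k.-tuple C) c : take k (rcons t c) = t.
Proof. by rewrite -cats1 -{1}(size_tuple t) take_size_cat. Qed.

Lemma pF0 : pF 0 = 0.
Proof. by rewrite /pF sum_tuple0 H0. Qed.

Lemma pF_ge0 k : 0 <= pF k.
Proof. by apply: sumr_ge0 => t _; case: ifP. Qed.

Lemma SF0 : SF 0 = 1.
Proof. by rewrite /SF sum_tuple0 H0. Qed.

Lemma VF0 : VF 0 = Phi [::].
Proof. by rewrite /VF sum_tuple0 H0 W0 mul1r. Qed.

Lemma SF_ge0 k : 0 <= SF k.
Proof. by apply: sumr_ge0 => t _; case: ifP. Qed.

Lemma VF_ge0 k : 0 <= VF k.
Proof. by apply: sumr_ge0 => t _; case: ifP => // _; apply: mulr_ge0. Qed.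

Lemma SF_rec k : SF k = pF k.+1 + SF k.+1.
Proof.
rewrite /pF /SF (sum_tuple_rcons _ (fun t => if H t && ~~ H (take k t) then W t else 0)).
rewrite (sum_tuple_rcons _ (fun t => if ~~ H t then W t else 0)) -big_split /=.
apply: eq_bigr => t _; rewrite -big_split /=.
case Ht: (H t) => /=.
  by rewrite big1 // => c _; rewrite take_rcons_tuple Ht /= andbF Hfrozen //= add0r.
rewrite -(mass (negbT Ht)); apply: eq_bigr => c _.
by rewrite take_rcons_tuple Ht andbT; case: (H (rcons t c)); rewrite ?addr0 ?add0r.
Qed.

Lemma VF_rec k : VF k.+1 + SF k <= VF k.
Proof.
rewrite /VF /SF (sum_tuple_rcons _ (fun t => if ~~ H t then W t * Phi t else 0)) -big_split /=.
apply: ler_sum => t _.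
case Ht: (H t) => /=.
  by rewrite big1 ?addr0 // => c _; rewrite Hfrozen.
have := drift (negbT Ht).
rewrite mulrBr mulr1 lerBrDr => h; apply: le_trans h.
rewrite (eq_bigr (fun c => W (rcons t c) * (if H (rcons t c) then 0 else Phi (rcons t c)))) //.
by move=> c _; case: (H (rcons t c)); rewrite ?mulr0.
Qed.

Lemma sumS_le K : \sum_(k < K) SF k <= Phi [::].
Proof.
suff : \sum_(k < K) SF k + VF K <= Phi [::].
  by move=> h; apply: le_trans h; rewrite lerDl VF_ge0.
elim: K => [|K IH]; first by rewrite big_ord0 add0r VF0.
rewrite big_ord_recr /= -addrA; apply: le_trans IH; rewrite lerD2l addrC.
exact: VF_rec.
Qed.

Lemma sump K : \sum_(k < K.+1) pF k = 1 - SF K.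
Proof.
elim: K => [|K IH]; first by rewrite big_ord1 pF0 SF0 subrr.
rewrite big_ord_recr /= IH (SF_rec K); ring.
Qed.

Lemma SF_decr k : SF k.+1 <= SF k.
Proof. by rewrite (SF_rec k) lerDr pF_ge0. Qed.

Lemma SF_mono m n : (m <= n)%N -> SF n <= SF m.
Proof.
elim: n => [|n IH]; first by rewrite leqn0 => /eqP ->.
rewrite leq_eqVlt => /orP [/eqP -> //| ]; rewrite ltnS => /IH.
exact/le_trans/SF_decr.
Qed.

Lemma SF_bound K : K.+1%:R * SF K <= Phi [::].
Proof.
apply: le_trans (sumS_le K.+1).
rewrite mulr_natl -[in X in _ *+ X](card_ord K.+1) -sumr_const; apply: ler_sum => k _.
by apply: SF_mono; rewrite -ltnS.
Qed.

Lemma sumkp K : \sum_(k < K.+1) k%:R * pF k + K%:R * SF K = \sum_(k < K) SF k.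
Proof.
elim: K => [|K IH]; first by rewrite big_ord1 big_ord0 !mul0r addr0.
rewrite big_ord_recr /= [in RHS]big_ord_recr /= -IH (SF_rec K).
rewrite -!natr1. ring.
Qed.



Lemma partial_kp n : \sum_(0 <= k < n) (k%:R * pF k) <= Phi [::].
Proof.
case: n => [|K]; first by rewrite big_geq.
rewrite big_mkord.
have := sumkp K.
have := sumS_le K.
have := SF_ge0 K.
move=> h1 h2 h3; apply: le_trans h2; rewrite -h3 lerDl.
by apply: mulr_ge0.
Qed.

Lemma series_kp : (\sum_(k <oo) ((k%:R)%:E * (pF k)%:E) <= (Phi [::])%:E)%E.
Proof.
apply: lime_le.
  apply: is_cvg_nneseries => n _ _; apply: mule_ge0; rewrite lee_fin //.
  exact: pF_ge0.
apply: nearW => n.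
rewrite (eq_bigr (fun k => (k%:R * pF k)%:E)); last by move=> k _; rewrite EFinM.
rewrite sumEFin lee_fin; exact: partial_kp.
Qed.

Lemma series_p : (\sum_(k <oo) (pF k)%:E)%E = 1%E.
Proof.
apply/le_anti/andP; split.
  apply: lime_le.
    by apply: is_cvg_nneseries => n _ _; rewrite lee_fin; apply: pF_ge0.
  apply: nearW => n; rewrite sumEFin lee_fin.
  case: n => [|K]; first by rewrite big_geq.
  rewrite big_mkord sump lerBlDr lerDl.
  exact: SF_ge0.
apply/lee_addgt0Pr => e e0.
have hx : 0 <= Phi [::] / e by rewrite divr_ge0 // ltW.
set K := Num.Def.archi_bound (Phi [::] / e).
have hK := archi_boundP hx.
have hS : SF K <= e.
  have hb := SF_bound K.
  rewrite -(@ler_pM2r _ K.+1%:R) ?ltr0Sn //.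
  apply: le_trans (_ : Phi [::] <= _); first by rewrite mulrC.
  rewrite -ler_pdivrMl // mulrC; apply: (le_trans (ltW hK)).
  by rewrite ler_nat.
apply: le_trans (_ : (\sum_(0 <= k < K.+1) (pF k)%:E + e%:E <= _)%E).
  rewrite sumEFin big_mkord sump -EFinD lee_fin.
  by rewrite -addrA lerDl addrC subr_ge0.
rewrite leeD2r //.
apply: (@nneseries_lim_ge _ _ xpredT 0 K.+1) => n _ _; rewrite lee_fin; exact: pF_ge0.
Qed.

End Frame.

Section Anal.
Variables (R : realType) (K Sig : finType) (s : K) (blank : Sig)
          (delta : K -> Sig -> (K + hstate) * Sig * dir).

Local Notation SCt := (SC Sig).
Local Notation fr := (@frop R Sig blank).
Local Notation simstep := (@simstep R K Sig s blank delta).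
Local Notation sg_t := (simcfg R K Sig).
Local Notation n := (nS Sig).
Local Notation ni := (ninv R Sig).

Definition mw (tau : SCt) : R :=
  match tau with inl _ => 0 | inr true => ni | inr false => 1 - ni end.

Definition Wsg (sg : sg_t) : R :=
  let: (q, tau, h, T, lam, j) := sg in lam ^+ 2 * (if midq q then mw tau else 1).

Definition Hsg (sg : sg_t) : bool := halted sg.1.1.1.1.1.

Definition Yc : R := (2 * n ^ 2)%:R.
Definition Ac : R := Yc + 1.

Definition Phisg (N : nat) (sg : sg_t) : R :=
  let: (q, tau, h, T, lam, j) := sg in
  let G := Ac * (N - j)%:R in
  match q with
  | inr _ => 0
  | inl None => G + Yc + 1
  | inl (Some (inl _)) => G + Yc
  | inl (Some (inr (q1, a, true))) => G + Yc - 1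
  | inl (Some (inr (q1, a, false))) => if tau == inl (delta q1 a).1.2 then G else G + Yc
  end.

Lemma simstepF q0 tau h T lam j p D c :
  qd s delta q0 tau = (p, D, Some false) ->
  simstep (inl q0, tau, h, T, lam, j) c = (p, c, move h D, T, lam, (j + donestep delta q0 tau)%N).
Proof. by move=> E; rewrite /simstep E. Qed.

Lemma simstepS q0 tau h T lam j p D c :
  qd s delta q0 tau = (p, D, Some true) -> ~~ midq (inl q0) ->
  simstep (inl q0, tau, h, T, lam, j) c =
    (p, c, move h D, T, lam * (c == inl (T (move h D)))%:R, (j + donestep delta q0 tau)%N).
Proof. by move=> E /negbTE M0; rewrite /simstep E M0. Qed.

Lemma simstepM q0 tau h T lam j p D c :
  qd s delta q0 tau = (p, D, Some true) -> midq (inl q0) ->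
  simstep (inl q0, tau, h, T, lam, j) c =
    match c with
    | inl w => (p, c, move h D, upd T (move h D) w, lam * fr (Some false) tau w (T (move h D)),
                (j + donestep delta q0 tau)%N)
    | inr _ => (p, c, move h D, T, 0, (j + donestep delta q0 tau)%N)
    end.
Proof. by move=> E M0; rewrite /simstep E M0. Qed.

Lemma sum_mw : \sum_(c : SCt) mw c = 1.
Proof. by rewrite sumSC big1 // add0r addrC subrK. Qed.

Lemma ni_n : ni * n%:R = 1.
Proof. by rewrite /ninv mulVf // nS_neq0. Qed.

Lemma sum_fr2 tau a : \sum_(w : Sig) fr (Some false) tau w a ^+ 2 = mw tau.
Proof.
case: tau => [w0|[]] /=.
- by rewrite big1 // => w _; rewrite expr0n.
- by rewrite sum_const_Sig expr2 -mulrA ni_n mulr1.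
- have E : forall w : Sig, ((w == a)%:R - ni) ^+ 2 = (1 - 2 * ni) * (w == a)%:R + ni * ni.
    by move=> w; case: (w == a); rewrite /=; ring.
  under eq_bigr do rewrite E.
  rewrite big_split /= sum_delta_r.
  have := ninv_sq R blank; rewrite /ninv => ->; ring.
Qed.

End Anal.

Section Anal2.
Variables (R : realType) (K Sig : finType) (s : K) (blank : Sig)
          (delta : K -> Sig -> (K + hstate) * Sig * dir).
Variables (x : seq Sig) (N : nat).
Hypothesis HN : halted (drun s blank delta x N).1.1.

Local Notation SCt := (SC Sig).
Local Notation fr := (@frop R Sig blank).
Local Notation simstep := (@simstep R K Sig s blank delta).
Local Notation sg_t := (simcfg R K Sig).
Local Notation n := (nS Sig).
Local Notation ni := (ninv R Sig).
Local Notation drun := (drun s blank delta x).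
Local Notation Wsg := (@Wsg R K Sig).
Local Notation Phisg := (@Phisg R K Sig delta N).
Local Notation Hsg := (@Hsg R K Sig).
Local Notation Yc := (@Yc R Sig).
Local Notation Ac := (@Ac R Sig).


Lemma WsgE q tau h T lam j : Wsg (q, tau, h, T, lam, j) = lam ^+ 2 * (if midq q then @mw R Sig tau else 1).
Proof. by []. Qed.

Lemma drun_frozen m k : halted (drun m).1.1 -> drun (m + k) = drun m.
Proof.
move=> hm; elim: k => [|k IH]; first by rewrite addn0.
rewrite addnS; have -> : drun (m + k).+1 = dstep delta (drun (m + k)) by [].
by rewrite IH; move: hm; case: (drun m) => [[[q0|hh] t] h].
Qed.

Lemma jltN j q1 T h : drun j = (inl q1, T, h) -> (j < N)%N.
Proof.
move=> E; rewrite ltnNge; apply/negP => Nj.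
have := drun_frozen (j - N) HN; rewrite subnKC // E => E2.
by move: HN; rewrite -E2.
Qed.

Definition Inv (sg : sg_t) : Prop :=
  let: (q, tau, h, T, lam, j) := sg in
  lam != 0 ->
  match q with
  | inl None => [/\ j = 0%N, T = input_tape blank x & h = 0]
  | inl (Some (inl q1)) => drun j = (inl q1, T, h) /\ tau = inl (T h)
  | inl (Some (inr (q1, a, m))) =>
      drun j = (inl q1, upd T h a, h) /\
      (if m then T h <> (delta q1 a).1.2 else tau = inl (T h))
  | inr hh => drun j = (inr hh, T, h)
  end.

Lemma sum_ind_sq (c0 : SCt) (lam : R) :
  \sum_(c : SCt) (lam * (c == c0)%:R) ^+ 2 = lam ^+ 2.
Proof.
rewrite (bigD1 c0) //= eqxx mulr1 big1 ?addr0 // => c /negbTE ->.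
by rewrite mulr0 expr0n.
Qed.

Lemma mass_sg sg : ~~ Hsg sg -> \sum_(c : SCt) Wsg (simstep sg c) = Wsg sg.
Proof.
case: sg => [[[[[q tau] h] T] lam] j]; case: q => [q0|hh] // _.
have := qd_facts s delta q0 tau.
case E: (qd s delta q0 tau) => [[p D] A] [hA hF hT].
case: A E hA hF hT => [[]|] // E _ hF hT.
- have [np hD] := hT erefl.
  case M0: (midq (inl q0)).
  + rewrite sumSC.
    under eq_bigr => w _ do rewrite (simstepM blank _ _ _ _ _ E M0) WsgE (negbTE np) mulr1 exprMn.
    rewrite !(simstepM blank _ _ _ _ _ E M0) !WsgE (negbTE np) expr0n !mul0r !addr0.
    by rewrite -mulr_sumr sum_fr2 ifT.
  + under eq_bigr => c _ do rewrite (simstepS blank _ _ _ _ _ E (negbT M0)) WsgE (negbTE np) mulr1.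
    by rewrite sum_ind_sq WsgE ifF // mulr1.
- have [hD nm mp] := hF erefl.
  under eq_bigr => c _ do rewrite (simstepF blank _ _ _ _ _ E) WsgE mp.
  by rewrite -mulr_sumr sum_mw WsgE ifF // (negbTE nm).
Qed.

End Anal2.

Section Anal3.
Variables (R : realType) (K Sig : finType) (s : K) (blank : Sig)
          (delta : K -> Sig -> (K + hstate) * Sig * dir).
Variables (x : seq Sig).

Local Notation SCt := (SC Sig).
Local Notation fr := (@frop R Sig blank).
Local Notation simstep := (@simstep R K Sig s blank delta).
Local Notation drun := (drun s blank delta x).
Local Notation Inv := (@Inv R K Sig s blank delta x).

Lemma upd_id (T : int -> Sig) i : upd T i (T i) = T.
Proof. by apply/funext => j; rewrite /upd; case: eqP => [->|]. Qed.

Lemma drunS j : drun j.+1 = dstep delta (drun j).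
Proof. by []. Qed.

Lemma mul_neq0 (a b : R) : a * b != 0 -> a != 0 /\ b != 0.
Proof. by rewrite mulf_eq0 negb_or => /andP. Qed.

Lemma natb_neq0 (b : bool) : (b%:R : R) != 0 -> b.
Proof. by case: b => //; rewrite eqxx. Qed.

Lemma Inv_init : Inv (@sinit R K Sig blank x).
Proof. by move=> _. Qed.

Lemma Inv_step sg c : Inv sg -> Inv (simstep sg c).
Proof.
case: sg => [[[[[q tau] h] T] lam] j]; case: q => [q0|hh] //.
case: q0 => [[q1|[[q1 a] []]]|].
-
  case: tau => [a|b] IV; rewrite /simstep /=.
  + case E: (delta q1 a) => [[p b] D] /=.
    case: (a =P b) => [ab|nab] /=.
    * move=> /mul_neq0 [l0 /natb_neq0/eqP c0]; have [dj ta] := IV l0.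
      move: ta => [ta].
      have dj1 : drun (j + 1) = (p, T, move h D).
        by rewrite addn1 drunS dj /= -ta E -ab ta upd_id.
      by case: p E dj1 => [p0|hh] E dj1 /=; first split.
    * move=> l0; have [dj [ta]] := IV l0.
      by rewrite addn0 E ta upd_id; split => // tb; apply: nab; rewrite ta; exact: tb.
  + move=> /mul_neq0 [l0 _]; have [_ ] := IV l0; done.
-
  move=> IV; rewrite /simstep /=.
  case: c => [w|b] /=; last by rewrite eqxx.
  move=> /mul_neq0 [l0 _]; have [dj _] := IV l0.
  by rewrite addn0 upd_upd upd_at.
-
  case: tau => [w|b] IV; rewrite /simstep /=.
  + case E: (delta q1 a) => [[p b] D] /=.
    case: (w =P b) => [wb|nwb] /=.
    * move=> /mul_neq0 [l0 /natb_neq0/eqP c0]; have [dj [tw]] := IV l0.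
      have dj1 : drun (j + 1) = (p, T, move h D).
        by rewrite addn1 drunS dj /= upd_at E upd_upd -wb tw upd_id.
      by case: p E dj1 => [p0|hh] E dj1 /=; first split.
    * move=> l0; have [dj [tw]] := IV l0.
      by rewrite addn0 E; split => // tb; apply: nwb; rewrite tw; exact: tb.
  + move=> /mul_neq0 [l0 _]; have [_ ] := IV l0; done.
-
  move=> IV; rewrite /simstep /=.
  move=> /mul_neq0 [l0 /natb_neq0/eqP ->]; have [-> -> ->] := IV l0.
  by split.
Qed.

End Anal3.

Section Anal4.
Variables (R : realType) (K Sig : finType) (s : K) (blank : Sig)
          (delta : K -> Sig -> (K + hstate) * Sig * dir).
Variables (x : seq Sig) (N : nat).
Hypothesis HN : halted (drun s blank delta x N).1.1.

Local Notation SCt := (SC Sig).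
Local Notation fr := (@frop R Sig blank).
Local Notation simstep := (@simstep R K Sig s blank delta).
Local Notation sg_t := (simcfg R K Sig).
Local Notation n := (nS Sig).
Local Notation ni := (ninv R Sig).
Local Notation drun := (drun s blank delta x).
Local Notation Wsg := (@Wsg R K Sig).
Local Notation Phisg := (@Phisg R K Sig delta N).
Local Notation Hsg := (@Hsg R K Sig).
Local Notation Yc := (@Yc R Sig).
Local Notation Ac := (@Ac R Sig).
Local Notation Inv := (@Inv R K Sig s blank delta x).

Lemma n_ge1 : 1 <= (n%:R : R).
Proof. by rewrite ler1n (nS_gt0 blank). Qed.

Lemma ni_ge0 : 0 <= ni.
Proof. by rewrite /ninv invr_ge0 ler0n. Qed.

Lemma ni_le1 : ni <= 1.
Proof. by rewrite /ninv invf_le1 ?n_ge1 // (lt_le_trans ltr01 n_ge1). Qed.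

Lemma YcE : Yc = 2 * (n%:R) ^+ 2.
Proof. by rewrite /Yc natrM natrX. Qed.

Lemma Yc_ge1 : 1 <= Yc.
Proof.
by rewrite /Yc ler1n muln_gt0 expn_gt0 (nS_gt0 blank).
Qed.

Lemma GS j : (j < N)%N -> Ac * (N - j.+1)%:R = Ac * (N - j)%:R - Ac.
Proof.
move=> jN; by rewrite -(subnSK jN) -natr1 mulrDr mulr1 addrK.
Qed.

Lemma G_ge j : (j < N)%N -> Ac <= Ac * (N - j)%:R.
Proof.
move=> jN; rewrite ler_peMr ?ler1n ?subn_gt0 //.
by rewrite /Ac addr_ge0 ?ler01 // (le_trans ler01 Yc_ge1).
Qed.

Lemma key_ineq tau a b : a != b ->
  2 * @mw R Sig tau <= Yc * fr (Some false) tau b a ^+ 2.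
Proof.
move=> ab; rewrite YcE.
have e : ni * n%:R = 1 := ni_n R blank.
have h0 := ni_ge0; have h1 := ni_le1.
case: tau => [w|[]] /=.
- by rewrite mulr0 expr0n /= mulr0.
- have -> : 2 * n%:R ^+ 2 * ni ^+ 2 = 2 * (ni * n%:R) ^+ 2 by ring.
  rewrite e expr1n mulr1; lra.
- rewrite eq_sym (negbTE ab) ?sub0r sqrrN.
  have -> : 2 * n%:R ^+ 2 * ni ^+ 2 = 2 * (ni * n%:R) ^+ 2 by ring.
  rewrite e expr1n mulr1; lra.
Qed.


Lemma lam0_child q tau h T j c : Wsg (simstep (q, tau, h, T, 0, j) c) = 0.
Proof.
case: q => [q0|hh]; last by rewrite WsgE expr0n /= mul0r.
rewrite /simstep; case: (qd s delta q0 tau) => [[p D] A].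
case: ifP => _; first by rewrite WsgE expr0n /= mul0r.
case: ifP => _; last by rewrite WsgE mul0r expr0n /= mul0r.
by case: c => [w|b]; rewrite WsgE ?mul0r expr0n /= mul0r.
Qed.

Lemma cont_term p c h' T' lam' j' :
  Wsg (@cont K Sig p, c, h', T', lam', j') *
    (if Hsg (@cont K Sig p, c, h', T', lam', j') then 0 else Phisg (@cont K Sig p, c, h', T', lam', j')) =
  lam' ^+ 2 * (if p is inl _ then Ac * (N - j')%:R + Yc else 0).
Proof. by case: p => [p0|hh]; rewrite WsgE /= ?mulr1 ?mulr0. Qed.

Lemma Wf_term q1 a c h' T' lam' j' :
  Wsg (inl (Some (inr (q1, a, true))), c, h', T', lam', j') *
    (if Hsg (inl (Some (inr (q1, a, true))), c, h', T', lam', j') then 0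
     else Phisg (inl (Some (inr (q1, a, true))), c, h', T', lam', j')) =
  lam' ^+ 2 * (@mw R Sig c * (Ac * (N - j')%:R + Yc - 1)).
Proof. by rewrite WsgE /= mulrA. Qed.

Lemma Ws_term q1 a w h' T' lam' j' :
  Wsg (inl (Some (inr (q1, a, false))), inl w, h', T', lam', j') *
    (if Hsg (inl (Some (inr (q1, a, false))), inl w, h', T', lam', j') then 0
     else Phisg (inl (Some (inr (q1, a, false))), inl w, h', T', lam', j')) =
  lam' ^+ 2 * (Ac * (N - j')%:R + Yc - Yc * (w == (delta q1 a).1.2)%:R).
Proof.
rewrite WsgE /= mulr1; congr (_ * _).
have -> : (inl w == inl (delta q1 a).1.2 :> SCt) = (w == (delta q1 a).1.2) by [].
by case: (w == _); rewrite ?mulr1 ?mulr0 ?subr0 ?addrK.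
Qed.

End Anal4.

Section Anal5.
Variables (R : realType) (K Sig : finType) (s : K) (blank : Sig)
          (delta : K -> Sig -> (K + hstate) * Sig * dir).
Variables (x : seq Sig) (N : nat).
Hypothesis HN : halted (drun s blank delta x N).1.1.

Local Notation SCt := (SC Sig).
Local Notation fr := (@frop R Sig blank).
Local Notation simstep := (@simstep R K Sig s blank delta).
Local Notation sg_t := (simcfg R K Sig).
Local Notation n := (nS Sig).
Local Notation ni := (ninv R Sig).
Local Notation drun := (drun s blank delta x).
Local Notation Wsg := (@Wsg R K Sig).
Local Notation Phisg := (@Phisg R K Sig delta N).
Local Notation Hsg := (@Hsg R K Sig).
Local Notation Yc := (@Yc R Sig).
Local Notation Ac := (@Ac R Sig).
Local Notation Inv := (@Inv R K Sig s blank delta x).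

Lemma cont_bound j (p : K + hstate) B : (j < N)%N -> 0 <= B ->
  (if p is inl _ then Ac * (N - (j + 1))%:R + Yc else 0) <= Ac * (N - j)%:R + B - 1.
Proof.
move=> jN B1.
have hG := G_ge R Sig jN.
have hY := Yc_ge1 R blank.
have hS := GS R Sig jN.
have hA : Ac = Yc + 1 by [].
rewrite addn1.
set G := Ac * (N - j)%:R in hG hS *.
case: p => [p0|hh]; last by lra.
rewrite hS; lra.
Qed.


Lemma sum_Wf_children q1 a h T lam j' (f : SCt -> sg_t) :
  (forall c, f c = (inl (Some (inr (q1, a, true))), c, h, T, lam, j')) ->
  \sum_(c : SCt) Wsg (f c) * (if Hsg (f c) then 0 else Phisg (f c)) =
  lam ^+ 2 * (Ac * (N - j')%:R + Yc - 1).
Proof.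
move=> hf; under eq_bigr => c _ do rewrite hf Wf_term.
by rewrite -mulr_sumr -mulr_suml sum_mw mul1r.
Qed.

Lemma sum_cont_children p h' T lam j' (f : SCt -> sg_t) :
  (forall c, f c = (@cont K Sig p, c, h', T, lam * (c == inl (T h'))%:R, j')) ->
  \sum_(c : SCt) Wsg (f c) * (if Hsg (f c) then 0 else Phisg (f c)) =
  lam ^+ 2 * (if p is inl _ then Ac * (N - j')%:R + Yc else 0).
Proof.
move=> hf; under eq_bigr => c _ do rewrite hf cont_term.
by rewrite -mulr_suml sum_ind_sq.
Qed.

Lemma drift_sg sg : Inv sg -> ~~ Hsg sg ->
  \sum_(c : SCt) Wsg (simstep sg c) * (if Hsg (simstep sg c) then 0 else Phisg (simstep sg c))
    <= Wsg sg * (Phisg sg - 1).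
Proof.
case: sg => [[[[[q tau] h] T] lam] j]; case: q => [q0|hh] // IV _.
case: (lam =P 0) => [l0|/eqP l0].
  rewrite l0 big1; last by move=> c _; rewrite lam0_child mul0r.
  by rewrite WsgE expr2 !mul0r.
have IVl := IV l0.
have hY := Yc_ge1 R blank.
have hl : 0 <= lam ^+ 2 by apply: sqr_ge0.
case: q0 IV IVl => [[q1|[[q1 a] []]]|] IV IVl.
-
  case: tau IV IVl => [a|b] IV [dj ta] //.
  have jN := jltN HN dj.
  case E: (delta q1 a) => [[p b] D].
  case: (a =P b) => [ab|nab].
  + have Eq : qd s delta (Some (inl q1)) (inl a) = (@cont K Sig p, D, Some true).
      by rewrite /= E ab eqxx.
    have ds : donestep delta (Some (inl q1)) (inl a) = true by rewrite /= E ab eqxx.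
    rewrite (sum_cont_children (p := p) (h' := move h D) (T := T) (lam := lam) (j' := (j + 1)%N));
      last by move=> c; rewrite (simstepS blank _ _ _ _ _ Eq) // ds.
    rewrite WsgE /= mulr1; apply: ler_wpM2l => //.
    exact: cont_bound.
  + have Eq : qd s delta (Some (inl q1)) (inl a) =
              (inl (Some (inr (q1, a, true))), DStay, Some false).
      by rewrite /= E; case: eqP.
    have ds : donestep delta (Some (inl q1)) (inl a) = false by rewrite /= E; case: eqP.
    rewrite (sum_Wf_children (q1 := q1) (a := a) (h := h) (T := T) (lam := lam) (j' := j));
      last by move=> c; rewrite (simstepF blank _ _ _ _ _ Eq) ds addn0.
    by rewrite WsgE /= mulr1 lexx.
-
  have [dj tb] := IVl.
  have jN := jltN HN dj.
  have Eq : qd s delta (Some (inr (q1, a, true))) tau =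
            (inl (Some (inr (q1, a, false))), DStay, Some true) by [].
  have M0 : midq (inl (Some (inr (q1, a, true))) : QK K Sig + hstate) by [].
  have ds : donestep delta (Some (inr (q1, a, true))) tau = false by [].
  rewrite sumSC !(simstepM blank _ _ _ _ _ Eq M0) !WsgE expr2 !mul0r !addr0.
  under eq_bigr => w _ do rewrite (simstepM blank _ _ _ _ _ Eq M0) Ws_term ds addn0.
  set b := (delta q1 a).1.2.
  set G := Ac * (N - j)%:R.
  have mh : move h DStay = h by [].
  rewrite mh.
  set f := fun w => fr (Some false) tau w (T h).
  have E1 : forall w, (lam * f w) ^+ 2 * (G + Yc - Yc * (w == b)%:R) =
     lam ^+ 2 * (G + Yc) * (f w ^+ 2) - lam ^+ 2 * Yc * (f w ^+ 2 * (w == b)%:R).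
    by move=> w; ring.
  under eq_bigr => w _ do rewrite E1.
  rewrite sumrB -!mulr_sumr sum_delta_r sum_fr2.
  rewrite [X in _ <= X]/= -/G.
  have key := key_ineq R blank tau (introN eqP tb).
  rewrite -/b -/f /= in key.
  rewrite -subr_ge0.
  set m := mw R tau.
  set fb := f b ^+ 2.
  have -> : lam ^+ 2 * m * (G + Yc - 1 - 1) - (lam ^+ 2 * (G + Yc) * m - lam ^+ 2 * Yc * fb)
            = lam ^+ 2 * (Yc * fb - 2 * m) by ring.
  by apply: mulr_ge0 => //; rewrite subr_ge0.
-
  case: tau IV IVl => [w|b] IV [dj tw] //.
  have jN := jltN HN dj.
  case: tw => tw.
  case E: (delta q1 a) => [[p b] D].
  case: (w =P b) => [wb|nwb].
  + have Eq : qd s delta (Some (inr (q1, a, false))) (inl w) = (@cont K Sig p, D, Some true).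
      by rewrite /= E wb eqxx.
    have ds : donestep delta (Some (inr (q1, a, false))) (inl w) = true by rewrite /= E wb eqxx.
    rewrite (sum_cont_children (p := p) (h' := move h D) (T := T) (lam := lam) (j' := (j + 1)%N));
      last by move=> c; rewrite (simstepS blank _ _ _ _ _ Eq) // ds.
    rewrite WsgE /= mulr1 E /=.
    have -> : (inl w == inl b :> SCt) = true by rewrite wb eqxx.
    apply: ler_wpM2l => //.
    rewrite -[X in X - 1]addr0; exact: cont_bound.
  + have Eq : qd s delta (Some (inr (q1, a, false))) (inl w) =
              (inl (Some (inr (q1, a, true))), DStay, Some false).
      by rewrite /= E; case: eqP.
    have ds : donestep delta (Some (inr (q1, a, false))) (inl w) = false by rewrite /= E; case: eqP.
    rewrite (sum_Wf_children (q1 := q1) (a := a) (h := h) (T := T) (lam := lam) (j' := j));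
      last by move=> c; rewrite (simstepF blank _ _ _ _ _ Eq) ds addn0.
    rewrite WsgE /= mulr1 E /=.
    have -> : (inl w == inl b :> SCt) = false by apply/negbTE/eqP => -[].
    by rewrite lexx.
-
  have Eq : qd s delta None tau = (inl (Some (inl s)), DStay, Some true) by [].
  rewrite (sum_cont_children (p := inl s) (h' := h) (T := T) (lam := lam) (j' := j));
    last by move=> c; rewrite (simstepS blank _ _ _ _ _ Eq) // addn0.
  by rewrite WsgE /= mulr1 addrK lexx.
Qed.

End Anal5.

Section Final.
Variables (R : realType) (K Sig : finType) (s : K) (blank : Sig)
          (delta : K -> Sig -> (K + hstate) * Sig * dir).

Local Notation M := (Mq R s blank delta).
Local Notation SCt := (SC Sig).

Lemma sqnorm_basis (T : int -> Sig) (lam : R) :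
  sqnorm M (fun t => ((lam * (t == T)%:R)%:C)%C) = (lam ^+ 2)%:E.
Proof.
rewrite /sqnorm.
transitivity (\esum_(t in [set: int -> Sig]%classic) (if t \in [set T]%classic then (lam ^+ 2)%:E else 0%E)).
  apply: eq_esum => t _; rewrite /sqmod /=.
  case: (t =P T) => [->|ne]; first by rewrite mem_set //= mulr1 [0 ^+ 2]expr2 mulr0 addr0.
  by rewrite memNset //= mulr0 !expr2 !mulr0 addr0.
by rewrite -esum_mkcond esum_set1 // lee_fin sqr_ge0.
Qed.


Local Notation simstep := (@simstep R K Sig s blank delta).
Local Notation Wsg := (@Wsg R K Sig).
Local Notation Hsg := (@Hsg R K Sig).
Local Notation Yc := (@Yc R Sig).
Local Notation Ac := (@Ac R Sig).

Lemma mw_ge0 tau : 0 <= @mw R Sig tau.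
Proof.
have h0 := ni_ge0 R Sig; have h1 := ni_le1 R blank.
by case: tau => [w|[]] //=; rewrite subr_ge0.
Qed.

Lemma Wsg_ge0 sg : 0 <= Wsg sg.
Proof.
case: sg => [[[[[q tau] h] T] lam] j]; rewrite WsgE mulr_ge0 ?sqr_ge0 //.
by case: ifP => _; rewrite ?mw_ge0.
Qed.

Lemma Phisg_ge0 N sg : 0 <= @Phisg R K Sig delta N sg.
Proof.
have hY := Yc_ge1 R blank.
have hA : Ac = Yc + 1 by [].
have hG : forall j, 0 <= Ac * (N - j)%:R by move=> j; rewrite mulr_ge0 // hA; lra.
case: sg => [[[[[q tau] h] T] lam] j].
case: q => [[[q1|[[q1 a] []]]|]|hh] /=; have := hG j; try lra.
by case: ifP => _; lra.
Qed.

Variable (x : seq Sig).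

Local Notation sim := (@sim R K Sig s blank delta x).

Lemma sim_rcons hs c : sim (rcons hs c) = simstep (sim hs) c.
Proof. by rewrite /sim foldl_rcons. Qed.

Lemma Inv_sim hs : Inv s blank delta x (sim hs).
Proof.
elim/last_ind: hs => [|hs c IH]; first exact: Inv_init.
by rewrite sim_rcons; apply: Inv_step.
Qed.

Lemma qrun_sim hs : qrun M x hs = qc s blank delta (sim hs).
Proof.
elim/last_ind: hs => [|hs c IH].
  rewrite /qrun /= /qinit /qc /sim /sinit /=; congr (_, _).
  apply/funext => t; rewrite repE /= mul1r /ket_input.
  by case: (t == _); rewrite ?rmorph1 ?rmorph0.
by rewrite /qrun foldl_rcons -/(qrun M x hs) IH step_corr sim_rcons.
Qed.


Definition Wh hs := Wsg (sim hs).
Definition Hh hs := Hsg (sim hs).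

Lemma Hh_sim hs : halted (qrun M x hs).1.1.1 = Hh hs.
Proof. by rewrite qrun_sim /Hh; case: (sim hs) => [[[[[q tau] h] T] lam] j]. Qed.

Lemma sqnorm_halted hs : Hh hs -> sqnorm M (qrun M x hs).2 = (Wh hs)%:E.
Proof.
rewrite qrun_sim /Hh /Wh; case: (sim hs) => [[[[[q tau] h] T] lam] j].
case: q => [q0|hh] // _.
by rewrite /= repE /= sqnorm_basis mulr1.
Qed.

Lemma prob_time_eq k : prob_time M x k = (pF Wh Hh k)%:E.
Proof.
rewrite /prob_time /pF -sumEFin big_mkcond /=; apply: eq_bigr => t _.
rewrite /halts_exactly size_tuple !Hh_sim.
by case: ifP => // /andP [h1 _]; rewrite sqnorm_halted.
Qed.


Variable (N : nat).
Hypothesis HN : halted (drun s blank delta x N).1.1.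

Definition Ph hs := @Phisg R K Sig delta N (sim hs).

Lemma W0h : Wh [::] = 1.
Proof. by rewrite /Wh /sim /= expr1n mulr1. Qed.

Lemma H0h : Hh [::] = false.
Proof. by []. Qed.

Lemma Hfrozenh hs c : Hh hs -> Hh (rcons hs c).
Proof.
rewrite /Hh sim_rcons; case: (sim hs) => [[[[[q tau] h] T] lam] j].
by case: q.
Qed.

Lemma massh hs : ~~ Hh hs -> \sum_(c : SCt) Wh (rcons hs c) = Wh hs.
Proof.
move=> nH; rewrite /Wh; under eq_bigr do rewrite sim_rcons.
exact: mass_sg.
Qed.

Lemma drifth hs : ~~ Hh hs ->
  \sum_(c : SCt) Wh (rcons hs c) * (if Hh (rcons hs c) then 0 else Ph (rcons hs c))
    <= Wh hs * (Ph hs - 1).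
Proof.
move=> nH; rewrite /Wh /Hh /Ph; under eq_bigr do rewrite sim_rcons.
exact: (drift_sg HN (Inv_sim hs)).
Qed.

Lemma eq_series (F G : nat -> \bar R) : (forall k, F k = G k) ->
  (\sum_(k <oo) F k)%E = (\sum_(k <oo) G k)%E.
Proof. by move=> e; have -> : F = G by apply/funext. Qed.

Lemma exp_bound : (expected_time M x <= (Ph [::])%:E)%E.
Proof.
have h := series_kp W0h H0h (fun hs => Wsg_ge0 _) (fun hs => Phisg_ge0 _ _) Hfrozenh massh drifth.
apply: le_trans h; rewrite le_eqVlt; apply/orP; left; apply/eqP.
by rewrite /expected_time; apply: eq_series => k; rewrite prob_time_eq.
Qed.

Lemma halts_h : halts_as M x.
Proof.
have h := series_p W0h H0h (fun hs => Wsg_ge0 _) (fun hs => Phisg_ge0 _ _) Hfrozenh massh drifth.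
by rewrite /halts_as -h; apply: eq_series => k; rewrite prob_time_eq.
Qed.

End Final.

Lemma map_id' (T : Type) (l : seq T) : map (fun a => a) l = l.
Proof. by elim: l => //= a l ->. Qed.

Section Output.
Variables (R : realType) (K Sig : finType) (s : K) (blank : Sig)
          (delta : K -> Sig -> (K + hstate) * Sig * dir).
Variables (x : seq Sig).

Local Notation M := (Mq R s blank delta).
Local Notation drun := (drun s blank delta x).
Local Notation sim := (@sim R K Sig s blank delta x).

Lemma drun_eq_halted m k : halted (drun m).1.1 -> halted (drun k).1.1 -> drun m = drun k.
Proof.
wlog mk : m k / (m <= k)%N.
  move=> hw hm hk; case: (leqP m k) => [mk|/ltnW km]; first exact: hw.
  by rewrite (hw k m).
move=> hm _; rewrite -(subnKC mk) drun_frozen //.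
Qed.

Lemma output_ok (o : tm_out Sig) : dtm_output s blank delta x o ->
  forall hs, halts_exactly M x hs -> (0 < sqnorm M (qrun M x hs).2)%E ->
  qout_is M (qrun M x hs).1.1.1 (qrun M x hs).2 (map_out (fun a => a) o).
Proof.
move=> [k0 Hk0] hs /andP [hh _] hpos.
rewrite Hh_sim in hh.
have sq := sqnorm_halted hh.
rewrite sq in hpos.
have IV : Inv s blank delta x (sim hs) by apply: Inv_sim.
rewrite qrun_sim.
move: hh IV hpos; rewrite /Hh /Wh.
case: (sim hs) => [[[[[q tau] h] T] lam] j].
case: q => [q0|hh0] // _ IV hpos.
have l0 : lam != 0.
  apply/negP => /eqP l0; move: hpos; rewrite WsgE l0 expr2 !mul0r lte_fin ltxx //.
have dj := IV l0.
move: Hk0; case E0: (drun k0) => [[[q1|hk] t1] h1] // Hk0.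
have := drun_eq_halted (m := k0) (k := j); rewrite E0 dj => /(_ isT isT) [<- <- <-].
rewrite /qc /=.
case: hk Hk0 {E0 dj IV} => [->|->|[w [-> tc]]] //=.
exists (map (fun a => a) w); split => //.
exists t1, ((lam%:C)%C); split.
- apply/negP => /eqP /(congr1 (@complex.Re R)) /= l0'; by move/eqP: l0; apply.
- by rewrite repE /= eqxx mulr1.
- by move=> t' ne; rewrite repE /= (negbTE ne) mulr0.
- by rewrite map_id'.
Qed.
End Output.

Theorem theorem5 (R : realType) (K Sig : finType) (s : K) (blank : Sig)
    (delta : K -> Sig -> (K + hstate) * Sig * dir) (f : nat -> nat) :
  dtm_time s blank delta f ->
  exists (M' : CQTM R) (emb : Sig -> qSQ M'),
    [/\ is_MQTM M', injective emb, emb blank = qblank M',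
        (exists (c : R) (N : nat), forall x : seq Sig, valid_input blank x ->
            (N <= size x)%N ->
            (expected_time M' (map emb x) <= (c * (f (size x))%:R)%:E)%E)
      & forall (x : seq Sig) (o : tm_out Sig), valid_input blank x ->
          dtm_output s blank delta x o -> cqtm_output M' (map emb x) (map_out emb o)].
Proof.
move=> Hf.
exists (Mq R s blank delta), (fun a => a).
split.
- exact: Mq_MQTM.
- by move=> a b.
- by [].
- exists (2 * Ac R Sig), 0%N => x vx _.
  rewrite map_id'.
  have HN := Hf x vx.
  have eb := @exp_bound R K Sig s blank delta x _ HN.
  apply: (le_trans eb).
  rewrite lee_fin /Ph /sim /=.
  move: HN; case: (f (size x)) => [|N'] HN; first by [].
  rewrite subn0.
  have hY := Yc_ge1 R blank.
  have hA : Ac R Sig = Yc R Sig + 1 by [].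
  have h1 : Ac R Sig * 1 <= Ac R Sig * N'.+1%:R.
    by rewrite ler_wpM2l ?ler1n // hA; lra.
  rewrite -mulrA; set P := Ac R Sig * N'.+1%:R in h1 *.
  lra.
- move=> x o vx ho; rewrite map_id'; split.
    exact: (@halts_h R K Sig s blank delta x _ (Hf x vx)).
  exact: output_ok.
Qed.
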